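(* Let $\Sigma=(\mathbf{x},\mathbf{F})$ be an LP seed of rank $n\ge2$ satisfying Condition 1.2. Then, as $R$-modules, $$R[x_2,x'_2,\dots,x_n,x'_n]=\ker(\varphi)\oplus R^{st}[x_2,x'_2,\dots,x_n,x'_n],$$ and the restriction of $\varphi$ to $R^{st}[x_2,x'_2,\dots,x_n,x'_n]$ is injective.
   Context: $R$ is a unique factorization domain containing $\mathbb{Z}$ and $\mathcal{F}$ is the field of rational functions in $n$ variables over $\mathrm{Frac}(R)$. An LP seed of rank $n$ is a pair $(\mathbf{x},\mathbf{F})$ where $\mathbf{x}=\{x_1,\dots,x_n\}$ is a transcendence basis of $\mathcal{F}$ over $\mathrm{Frac}(R)$ and $\mathbf{F}=\{F_1,\dots,F_n\}$ are irreducible polynomials in $R[x_1,\dots,x_n]$ with $x_j\nmid F_i$ for all $i,j$ and $F_i$ not involving $x_i$. The exchange Laurent polynomial is $\hat F_j=F_j/\prod_{k\neq j}x_k^{a_k}$, with $a_k\in\mathbb{Z}_{\ge0}$ maximal such that $F_k^{a_k}$ divides $F_j|_{x_k\leftarrow F_k/x'_k}$ in $R[x_1,\dots,x_{k-1},(x'_k)^{-1},x_{k+1},\dots,x_n]$. Set $x'_j=\hat F_j/x_j$. Lexicographic order on $\mathbb{Z}^n$: $\mathbf{a}\prec\mathbf{a}'$ if the first nonzero entry of $\mathbf{a}'-\mathbf{a}$ is positive; the lexicographically first monomial of a polynomial is its term with $\prec$-smallest exponent vector. Condition 1.2: for every $k\in[1,n]$, with $M_k$ the lexicographically first monomial of $F_k$: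 (i) $\hat F_k=F_k$; (ii) $M_k=\mathbf{x}^{\mathbf{v}_k}=x_{k+1}^{v_{k+1,k}}\cdots x_n^{v_{n,k}}$ (coefficient $1$) with $\mathbf{v}_k\in\mathbb{Z}_{\ge0}^{n-k}$ for $k\in[1,n-1]$, and $M_n=1$; (iii) if $k\ne1$ and $F_k$ involves $x_1$, then every monomial of $F_k-M_k$ is divisible by $x_1$; (iv) if $k\notin\{1,2\}$, $F_k$ does not involve $x_1$, and there is $i\in[2,k-1]$ such that $x_k$ divides $M_i$, then every monomial of $F_k-M_k$ is divisible by $x_i$. Under (i), $x'_j=F_j/x_j\in R[x_1,x_2^{\pm1},\dots,x_n^{\pm1}]$ for $j\ge2$, so $R[x_2,x'_2,\dots,x_n,x'_n]\subseteq R[x_1,x_2^{\pm1},\dots,x_n^{\pm1}]$; $\varphi:R[x_2,x'_2,\dots,x_n,x'_n]\to R[x_2^{\pm1},\dots,x_n^{\pm1}]$ is the restriction of the $R$-algebra homomorphism $R[x_1,x_2^{\pm1},\dots,x_n^{\pm1}]\to R[x_2^{\pm1},\dots,x_n^{\pm1}]$ sending $x_1\mapsto0$ and $x_i^{\pm1}\mapsto x_i^{\pm1}$ ($i\ge2$). A standard monomial in $x_2,x'_2,\dots,x_n,x'_n$ is a monomial in these containing no product $x_ix'_i$; $R^{st}[x_2,x'_2,\dots,x_n,x'_n]$ denotes their $R$-linear span. *)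

(* Defs.v *)
From HB Require Import structures.
From mathcomp Require Import all_boot all_order all_algebra.
From mathcomp Require Import fraction.
From mathcomp Require Export mpoly.
From Stdlib Require Import ClassicalEpsilon.

Set Implicit Arguments.
Unset Strict Implicit.
Unset Printing Implicit Defensive.

Import Order.TTheory GRing.Theory Num.Theory.
Local Open Scope ring_scope.

Definition rdvd (T : comRingType) (a b : T) : Prop := exists c : T, b = a * c.

Definition irreducible_elt (T : idomainType) (a : T) : Prop :=
  [/\ a != 0, a \isn't a GRing.unit &
      forall b c : T, a = b * c -> b \is a GRing.unit \/ c \is a GRing.unit].

Definition prime_elt (T : idomainType) (a : T) : Prop :=
  [/\ a != 0, a \isn't a GRing.unit &
      forall b c : T, rdvd a (b * c) -> rdvd a b \/ rdvd a c].

(* Unique factorization domain: every nonzero nonunit is a (finite)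
   product of irreducible elements, and every irreducible element is
   prime (which is equivalent to uniqueness of the factorization). *)
Definition is_UFD (T : idomainType) : Prop :=
  (forall a : T, a != 0 -> a \isn't a GRing.unit ->
     exists s : seq T, List.Forall (@irreducible_elt T) s /\ a = \prod_(p <- s) p)
  /\ (forall a : T, irreducible_elt a -> prime_elt a).

(* The domain R contains Z, i.e. the canonical map Z -> R is injective. *)
Definition contains_Z (T : idomainType) : Prop :=
  forall m : nat, (m.+1)%:R != (0 : T).

(* Variables x_1, ..., x_n are 'X_i for i : 'I_n (x_1 is index 0).      *)

Definition lexlt (n : nat) (a b : 'X_{1..n}) : bool :=
  [exists i : 'I_n, [forall j : 'I_n, (j < i)%N ==> (a j == b j)] && (a i < b i)%N].

Definition lexfirst (n : nat) (R : ringType) (p : {mpoly R[n]}) (m : 'X_{1..n}) : Prop :=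
  m \in msupp p /\ forall m', m' \in msupp p -> m' != m -> lexlt m m'.

Definition involves (n : nat) (R : ringType) (p : {mpoly R[n]}) (i : 'I_n) : Prop :=
  exists2 m, m \in msupp p & (0 < m i)%N.

Definition rest_divisible (n : nat) (R : ringType) (p : {mpoly R[n]}) (m0 : 'X_{1..n})
  (i : 'I_n) : Prop :=
  forall m, m \in msupp p -> m != m0 -> (0 < m i)%N.

(* substitution x_k <- c * x_k (here x_k is reinterpreted as (x'_k)^{-1},
   so this realises x_k <- F_k / x'_k in R[x_1,..,(x'_k)^{-1},..,x_n]) *)
Definition subst_var (n : nat) (R : comRingType) (k : 'I_n) (c : {mpoly R[n]})
  (p : {mpoly R[n]}) : {mpoly R[n]} :=
  p \mPo [tuple (if i == k then c * 'X_i else 'X_i) | i < n].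

Definition LP_seed (n : nat) (R : idomainType) (F : 'I_n -> {mpoly R[n]}) : Prop :=
  forall i : 'I_n,
    [/\ irreducible_elt (F i),
        forall j : 'I_n, ~ rdvd ('X_j) (F i) &
        ~ involves (F i) i].

(* Condition 1.2 (i): \hat F_j = F_j, i.e. a_k = 0 for all k <> j, i.e.
   F_k (= F_k^1) does not divide F_j|_{x_k <- F_k/x'_k}. *)
Definition cond12_i (n : nat) (R : idomainType) (F : 'I_n -> {mpoly R[n]}) : Prop :=
  forall j k : 'I_n, k != j -> ~ rdvd (F k) (subst_var k (F k) (F j)).

(* Condition 1.2 (ii)-(iv), with M k the lexicographically first monomial
   of F k (0-based indices: paper's x_k is 'X_(k-1)). *)
Definition cond12_rest (n : nat) (R : idomainType) (F : 'I_n -> {mpoly R[n]})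
  (M : 'I_n -> 'X_{1..n}) : Prop :=
  forall k : 'I_n,
    [/\
        lexfirst (F k) (M k) /\ (F k)@_(M k) = 1 /\
          (forall i : 'I_n, (i <= k)%N -> M k i = 0%N),
        forall i0 : 'I_n, (i0 : nat) = 0%N -> (k : nat) != 0%N ->
          involves (F k) i0 -> rest_divisible (F k) (M k) i0 &
        forall i0 : 'I_n, (i0 : nat) = 0%N -> (2 <= k)%N -> ~ involves (F k) i0 ->
          forall i : 'I_n, (1 <= i)%N -> (i < k)%N -> (0 < M i k)%N ->
            rest_divisible (F k) (M k) i].

Definition condition_1_2 (n : nat) (R : idomainType) (F : 'I_n -> {mpoly R[n]}) : Prop :=
  cond12_i F /\ exists M : 'I_n -> 'X_{1..n}, cond12_rest F M.

Section Ambient.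
Variables (n : nat) (R : idomainType) (F : 'I_n -> {mpoly R[n]}).

Definition ambient := {fraction {mpoly R[n]}}.

Definition tofr (p : {mpoly R[n]}) : ambient := @FracField.tofrac {mpoly R[n]} p.

Definition xv (i : 'I_n) : ambient := tofr 'X_i.

(* x'_j = \hat F_j / x_j, and \hat F_j = F_j under Condition 1.2 (i) *)
Definition xpv (j : 'I_n) : ambient := tofr (F j) / xv j.

Definition cst (c : R) : ambient := tofr c%:MP.

Definition gmon (a b : 'I_n -> nat) : ambient :=
  \prod_(i < n | (i : nat) != 0%N) (xv i ^+ a i * xpv i ^+ b i).

Definition is_standard (a b : 'I_n -> nat) : Prop :=
  forall i : 'I_n, (i : nat) != 0%N -> a i = 0%N \/ b i = 0%N.

(* R[x_2, x'_2, ..., x_n, x'_n] as a subset of the ambient field *)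
Definition inA (f : ambient) : Prop :=
  exists s : seq (R * ('I_n -> nat) * ('I_n -> nat)),
    f = \sum_(t <- s) cst t.1.1 * gmon t.1.2 t.2.

(* R^{st}[x_2, x'_2, ..., x_n, x'_n]: R-span of standard monomials *)
Definition inRst (f : ambient) : Prop :=
  exists s : seq (R * ('I_n -> nat) * ('I_n -> nat)),
    (forall t, List.In t s -> is_standard t.1.2 t.2) /\
    f = \sum_(t <- s) cst t.1.1 * gmon t.1.2 t.2.

(* D = x_2 ... x_n; the Laurent ring R[x_1, x_2^{+-1}, ..., x_n^{+-1}]
   consists of the p / D^k *)
Definition Dprod : {mpoly R[n]} := \prod_(i < n | (i : nat) != 0%N) 'X_i.

Definition kill_x1 (p : {mpoly R[n]}) : {mpoly R[n]} :=
  p \mPo [tuple (if (i : nat) == 0%N then 0 else 'X_i) | i < n].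

Definition phi_graph (f g : ambient) : Prop :=
  exists (p : {mpoly R[n]}) (k : nat),
    f = tofr p / tofr (Dprod ^+ k) /\ g = tofr (kill_x1 p) / tofr (Dprod ^+ k).

(* phi : R[x_1, x_2^{+-1},..] -> R[x_2^{+-1},..], x_1 |-> 0 (values outside
   the Laurent ring are irrelevant) *)
Definition phi (f : ambient) : ambient :=
  epsilon (inhabits 0) (fun g => phi_graph f g).

End Ambient.

(* Main.v *)
Require Import Defs.
From HB Require Import structures.
From mathcomp Require Import all_boot all_order all_algebra.
From mathcomp Require Import fraction mpoly.
From mathcomp Require Import ring lra zify.
From Stdlib Require Import ClassicalEpsilon.
Set Implicit Arguments.
Unset Strict Implicit.
Unset Printing Implicit Defensive.
Import Order.TTheory GRing.Theory Num.Theory.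
Local Open Scope ring_scope.

Section Lex.
Variable n : nat.
Implicit Types a b c : 'X_{1..n}.

Lemma lexltP a b : reflect (exists i : 'I_n, (forall j : 'I_n, (j < i)%N -> a j = b j) /\ (a i < b i)%N) (lexlt a b).
Proof.
apply: (iffP existsP) => [[i /andP[/forallP H Hi]]|[i [H Hi]]].
  by exists i; split => // j ji; apply/eqP; move: (H j); rewrite ji.
by exists i; rewrite Hi andbT; apply/forallP => j; apply/implyP => /H ->.
Qed.

Lemma lexlt_irr a : ~~ lexlt a a.
Proof. by apply/negP => /lexltP [i [_]]; rewrite ltnn. Qed.

Lemma lexlt_trans a b c : lexlt a b -> lexlt b c -> lexlt a c.
Proof.
move=> /lexltP [i [Hi ai]] /lexltP [j [Hj bj]]; apply/lexltP.
case: (ltngtP i j) => [ij|ji|/val_inj ij].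
- exists i; split; last by rewrite -(Hj i ij).
  by move=> k ki; rewrite Hi // Hj // (ltn_trans ki ij).
- exists j; split; last by rewrite (Hi j ji).
  by move=> k kj; rewrite Hi ?(ltn_trans kj ji) // Hj.
- subst j; exists i; split; last exact: ltn_trans ai bj.
  by move=> k ki; rewrite Hi // Hj.
Qed.

Lemma lexlt_asym a b : lexlt a b -> ~~ lexlt b a.
Proof. by move=> ab; apply/negP => ba; move: (lexlt_trans ab ba); rewrite (negbTE (lexlt_irr a)). Qed.

Lemma lexlt_total a b : a != b -> lexlt a b || lexlt b a.
Proof.
move=> ab.
have [i0 Hi0] : exists i0 : 'I_n, a i0 != b i0.
  apply/existsP; apply: contraR ab; rewrite negb_exists => /forallP H.
  by apply/eqP/mnmP => i; move: (H i); rewrite negbK => /eqP.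
case: (@arg_minnP _ i0 (fun i : 'I_n => a i != b i) (fun i : 'I_n => (i : nat)) Hi0) => i Hi Hmin.
have Hlt : forall j : 'I_n, (j < i)%N -> a j = b j.
  move=> j ji; apply/eqP; apply: contraLR ji => /Hmin; by rewrite -leqNgt.
case: (ltngtP (a i) (b i)) => [l|l|e]; last by rewrite e eqxx in Hi.
- by apply/orP; left; apply/lexltP; exists i.
- by apply/orP; right; apply/lexltP; exists i; split => // j /Hlt ->.
Qed.

Lemma lexltD2r a b c : lexlt a b -> lexlt (a + c)%MM (b + c)%MM.
Proof.
move=> /lexltP [i [H Hi]]; apply/lexltP; exists i; split.
  by move=> j ji; rewrite !mnmDE H.
by rewrite !mnmDE ltn_add2r.
Qed.

Lemma lexltD2l a b c : lexlt a b -> lexlt (c + a)%MM (c + b)%MM.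
Proof. by rewrite ![(c + _)%MM]addmC; apply: lexltD2r. Qed.

Definition lexle a b := (a == b) || lexlt a b.

Lemma lexleD a b c d : lexle a b -> lexle c d -> lexle (a + c)%MM (b + d)%MM.
Proof.
case/orP => [/eqP->|ab]; case/orP => [/eqP->|cd]; rewrite /lexle ?eqxx //.
- by rewrite lexltD2l ?orbT.
- by rewrite lexltD2r ?orbT.
- by rewrite (lexlt_trans (lexltD2r c ab) (lexltD2l b cd)) orbT.
Qed.

Lemma lexleD_lt a b c d : lexlt a b -> lexle c d -> lexlt (a + c)%MM (b + d)%MM.
Proof.
move=> ab; case/orP => [/eqP->|cd]; first exact: lexltD2r.
exact: (lexlt_trans (lexltD2r c ab) (lexltD2l b cd)).
Qed.

End Lex.

Section LM.
Variables (n : nat) (R : idomainType).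
Implicit Types (p q : {mpoly R[n]}) (m : 'X_{1..n}).

Definition LM p m := p@_m = 1 /\ forall u, u \in msupp p -> lexle m u.

Lemma LM_X m : LM 'X_[m] m.
Proof.
split; first by rewrite mcoeffX eqxx.
by move=> u; rewrite msuppX inE => /eqP ->; rewrite /lexle eqxx.
Qed.

Lemma LM_rest p m : LM p m -> (p - 'X_[m])@_m = 0 /\
  forall u, u \in msupp (p - 'X_[m]) -> lexlt m u.
Proof.
case=> H1 H2; split; first by rewrite mcoeffB mcoeffX eqxx H1 subrr.
move=> u; rewrite mcoeff_msupp mcoeffB mcoeffX.
case: (eqVneq m u) => [<-|mu]; first by rewrite H1 subrr eqxx.
rewrite subr0 => Hu; have: u \in msupp p by rewrite mcoeff_msupp.
by move/H2; rewrite /lexle (negbTE mu).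
Qed.

Lemma LM_mul p q m m' : LM p m -> LM q m' -> LM (p * q) (m + m')%MM.
Proof.
move=> Hp Hq; split; last first.
  move=> w /msuppM_le /allpairsP [[u v] [/= Hu Hv ->]].
  by apply: lexleD; [apply: Hp.2 | apply: Hq.2].
have [Ep Sp] := LM_rest Hp; have [Eq Sq] := LM_rest Hq.
have -> : p * q = ('X_[m] + (p - 'X_[m])) * ('X_[m'] + (q - 'X_[m'])).
  by rewrite !subrKC.
move: (p - 'X_[m]) (q - 'X_[m']) Ep Sp Eq Sq => p' q' Ep Sp Eq Sq.
rewrite mulrDl !mulrDr !mcoeffD -mpolyXD mcoeffX eqxx.
rewrite [('X_[m] * q')]mulrC mcoeffMX Eq [(m + m')%MM]addmC mcoeffMX Ep.
rewrite [(m' + m)%MM]addmC.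
rewrite (memN_msupp_eq0 (m := (m + m')%MM)) ?addr0 ?add0r //.
apply/negP => /msuppM_le /allpairsP [[u v] [/= Hu Hv E]].
have Hv' : lexle m' v by rewrite /lexle Sq ?orbT.
have := lexleD_lt (Sp _ Hu) Hv'.
by rewrite -E (negbTE (lexlt_irr _)).
Qed.

Lemma LM_1 : LM 1 0%MM.
Proof. by rewrite -mpolyX0; apply: LM_X. Qed.

Lemma LM_exp p m k : LM p m -> LM (p ^+ k) (m *+ k)%MM.
Proof.
move=> H; elim: k => [|k IH]; first by rewrite expr0 mulm0n; apply: LM_1.
by rewrite exprS mulmS; apply: LM_mul.
Qed.

Lemma LM_prod (I : Type) (r : seq I) (P : pred I) (f : I -> {mpoly R[n]}) (g : I -> 'X_{1..n}) :
  (forall i, P i -> LM (f i) (g i)) ->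
  LM (\prod_(i <- r | P i) f i) (\big[+%MM/0%MM]_(i <- r | P i) g i).
Proof.
move=> H; apply: (big_ind2 (fun a b => LM a b)); first exact: LM_1.
  by move=> ? ? ? ?; apply: LM_mul.
exact: H.
Qed.

Lemma LM_coef_notin p m u : LM p m -> lexlt u m -> p@_u = 0.
Proof.
case=> _ H um; apply: memN_msupp_eq0; apply/negP => /H.
case/orP => [/eqP E|mu]; first by rewrite E (negbTE (lexlt_irr _)) in um.
by rewrite (negbTE (lexlt_asym mu)) in um.
Qed.


End LM.

Section Kill.
Variables (n : nat) (R : idomainType) (hn0 : (0 < n)%N).
Implicit Types (p q : {mpoly R[n]}) (m : 'X_{1..n}).
Let o0 : 'I_n := Ordinal hn0.
Let tk : n.-tuple {mpoly R[n]} := [tuple (if (i : nat) == 0%N then 0 else 'X_i) | i < n].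

Lemma killE p : kill_x1 p = comp_mpoly tk p.
Proof. by []. Qed.

Lemma killM p q : kill_x1 (p * q) = kill_x1 p * kill_x1 q.
Proof. by rewrite !killE rmorphM. Qed.

Lemma killXn p k : kill_x1 (p ^+ k) = kill_x1 p ^+ k.
Proof. by rewrite !killE rmorphXn. Qed.

Lemma killC c : kill_x1 (c%:MP : {mpoly R[n]}) = c%:MP.
Proof. by rewrite killE comp_mpolyC. Qed.

Lemma killD p q : kill_x1 (p + q) = kill_x1 p + kill_x1 q.
Proof. by rewrite !killE rmorphD. Qed.

Lemma kill_prod (I : Type) (r : seq I) (P : pred I) (f : I -> {mpoly R[n]}) :
  kill_x1 (\prod_(i <- r | P i) f i) = \prod_(i <- r | P i) kill_x1 (f i).
Proof. by rewrite !killE rmorph_prod. Qed.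

Lemma killXi (i : 'I_n) : (i : nat) != 0%N -> kill_x1 ('X_i : {mpoly R[n]}) = 'X_i.
Proof.
by move=> /negbTE Hi; rewrite killE comp_mpolyXU -tnth_nth tnth_mktuple Hi.
Qed.

Lemma kill_Xm m : 'X_[m] \mPo tk = if m o0 == 0%N then 'X_[m] else 0.
Proof.
rewrite comp_mpolyX (bigD1 o0) //= {1}/tk tnth_mktuple /=.
case: eqP => [E|/eqP ne]; last by rewrite expr0n (negbTE ne) mul0r.
rewrite E expr0 mul1r mpolyXE_id [RHS](bigD1 o0) //= E expr0 mul1r.
apply: eq_bigr => i Hi.
rewrite /tk tnth_mktuple ifN //; apply: contra Hi => /eqP Hi; apply/eqP/val_inj.
Qed.

Lemma kill_coef p m : (kill_x1 p)@_m = if m o0 == 0%N then p@_m else 0.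
Proof.
rewrite killE comp_mpolyEX raddf_sum /=.
case: ifP => Hm.
  transitivity ((\sum_(u <- msupp p) p@_u *: 'X_[u])@_m); last by rewrite -mpolyE.
  rewrite raddf_sum /=; apply: eq_bigr => u _.
  rewrite kill_Xm; case: ifP => // Hu; rewrite scaler0 mcoeffZ mcoeffX.
  case: eqP => [E|]; last by rewrite mulr0 mcoeff0.
  by rewrite E Hm in Hu.
rewrite big1 // => u _; rewrite kill_Xm; case: ifP => Hu; last by rewrite scaler0 mcoeff0.
rewrite mcoeffZ mcoeffX; case: eqP => [E|]; last by rewrite mulr0.
by rewrite -E Hu in Hm.
Qed.

Lemma kill_supp p u : u \in msupp (kill_x1 p) -> u o0 = 0%N /\ u \in msupp p.
Proof.
rewrite !mcoeff_msupp kill_coef; case: ifP => [/eqP E H|_]; first by []. 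
by rewrite eqxx.

Qed.

Lemma LM_kill p m : m o0 = 0%N -> LM p m -> LM (kill_x1 p) m.
Proof.
move=> H0 [H1 H2]; split; first by rewrite kill_coef H0 eqxx.
by move=> u /kill_supp [_ /H2].
Qed.

End Kill.

Section Frac.
Variables (n : nat) (R : idomainType).
Implicit Types (p q : {mpoly R[n]}).
Local Notation K := (ambient n R).

Lemma tofrM p q : tofr (p * q) = tofr p * tofr q.
Proof. exact: rmorphM. Qed.
Lemma tofrD p q : tofr (p + q) = tofr p + tofr q.
Proof. exact: rmorphD. Qed.
Lemma tofrN p : tofr (- p) = - tofr p.
Proof. exact: rmorphN. Qed.
Lemma tofr0 : tofr (0 : {mpoly R[n]}) = 0.
Proof. exact: rmorph0. Qed.
Lemma tofr1 : tofr (1 : {mpoly R[n]}) = 1.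
Proof. exact: rmorph1. Qed.
Lemma tofrXn p k : tofr (p ^+ k) = tofr p ^+ k.
Proof. exact: rmorphXn. Qed.
Lemma tofr_prod (I : Type) (r : seq I) (P : pred I) (f : I -> {mpoly R[n]}) :
  tofr (\prod_(i <- r | P i) f i) = \prod_(i <- r | P i) tofr (f i).
Proof. exact: rmorph_prod. Qed.
Lemma tofr_sum (I : Type) (r : seq I) (P : pred I) (f : I -> {mpoly R[n]}) :
  tofr (\sum_(i <- r | P i) f i) = \sum_(i <- r | P i) tofr (f i).
Proof. exact: rmorph_sum. Qed.
Lemma tofr_eq0 p : (tofr p == 0) = (p == 0).
Proof. exact: tofrac_eq0. Qed.
Lemma tofr_inj p q : tofr p = tofr q -> p = q.
Proof. by move/eqP; rewrite /tofr tofrac_eq => /eqP. Qed.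

Lemma cstD (a b : R) : cst n (a + b) = cst n a + cst n b.
Proof. by rewrite /cst raddfD tofrD. Qed.
Lemma cstM (a b : R) : cst n (a * b) = cst n a * cst n b.
Proof. by rewrite /cst mpolyCM tofrM. Qed.
Lemma cstN (a : R) : cst n (- a) = - cst n a.
Proof. by rewrite /cst raddfN tofrN. Qed.
Lemma cst0 : cst n (0 : R) = 0 :> K.
Proof. by rewrite /cst raddf0 tofr0. Qed.
Lemma cst1 : cst n (1 : R) = 1 :> K.
Proof. by rewrite /cst tofr1. Qed.
Lemma cst_sum (I : Type) (r : seq I) (P : pred I) (f : I -> R) :
  cst n (\sum_(i <- r | P i) f i) = \sum_(i <- r | P i) cst n (f i).
Proof. by rewrite /cst raddf_sum tofr_sum. Qed.

Lemma mpolyX_neq0 m : ('X_[m] : {mpoly R[n]}) != 0.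
Proof. by apply/eqP => /(congr1 (mcoeff m)); rewrite mcoeffX eqxx mcoeff0 => /eqP; rewrite oner_eq0. Qed.

Lemma xv_neq0 (i : 'I_n) : xv R i != 0.
Proof. by rewrite /xv tofr_eq0 mpolyX_neq0. Qed.

End Frac.

Opaque kill_x1.

Section PhiSec.
Variables (n : nat) (R : idomainType).
Local Notation K := (ambient n R).
Implicit Types (a b : 'I_n -> nat) (q : 'I_n -> {mpoly R[n]}).

Definition Qpoly (k : nat) a b q : {mpoly R[n]} :=
  \prod_(i < n | (i : nat) != 0%N) ('X_i ^+ (a i + (k - b i)) * q i ^+ b i).

Definition Pgen a b q : K :=
  \prod_(i < n | (i : nat) != 0%N) (xv R i ^+ a i * (tofr (q i) / xv R i) ^+ b i).

Lemma pf (x y : K) (a b k : nat) : x != 0 -> (b <= k)%N ->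
  x ^+ k * (x ^+ a * (y / x) ^+ b) = x ^+ (a + (k - b)) * y ^+ b.
Proof.
move=> x0 bk; rewrite expr_div_n exprD -{1}(subnK bk) exprD.
have xb : x ^+ b != 0 by rewrite expf_neq0.
move: (x ^+ b) (x ^+ (k - b)) (x ^+ a) (y ^+ b) xb => u v w z u0.
by rewrite [w * (z / u)]mulrA -mulrA [u * _]mulrC divfK // mulrA [v * w]mulrC.
Qed.

Lemma Dprod_neq0 k : tofr (Dprod n R ^+ k) != 0.
Proof.
rewrite tofrXn expf_neq0 // /Dprod tofr_prod; apply/prodf_neq0 => i _.
exact: xv_neq0.
Qed.

Lemma Pgen_Q k a b q : (forall i : 'I_n, (i : nat) != 0%N -> (b i <= k)%N) ->
  tofr (Dprod n R ^+ k) * Pgen a b q = tofr (Qpoly k a b q).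
Proof.
move=> Hb; rewrite /Dprod -prodrXl tofr_prod /Pgen -big_split /= tofr_prod.
apply: eq_bigr => i Hi.
rewrite tofrXn -[tofr 'X_i]/(xv R i) pf ?xv_neq0 ?Hb // tofrM !tofrXn.
by [].
Qed.

Lemma Pgen_div k a b q : (forall i : 'I_n, (i : nat) != 0%N -> (b i <= k)%N) ->
  Pgen a b q = tofr (Qpoly k a b q) / tofr (Dprod n R ^+ k).
Proof.
move=> Hb; rewrite -(@Pgen_Q k a b q Hb) mulrC mulKf //; exact: Dprod_neq0.
Qed.

Lemma kill_Qpoly k a b q : kill_x1 (Qpoly k a b q) = Qpoly k a b (fun i => kill_x1 (q i)).
Proof.
rewrite /Qpoly kill_prod; apply: eq_bigr => i Hi.
by rewrite killM !killXn killXi.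
Qed.

Lemma kill_Dprod : kill_x1 (Dprod n R) = Dprod n R.
Proof. by rewrite /Dprod kill_prod; apply: eq_bigr => i Hi; rewrite killXi. Qed.

Definition kb b := (\sum_(i < n) b i)%N.

Lemma kb_ge b : forall i : 'I_n, (i : nat) != 0%N -> (b i <= kb b)%N.
Proof. by move=> i _; rewrite /kb (bigD1 i) //= leq_addr. Qed.

Lemma graph1 q c a b :
  phi_graph (cst n c * Pgen a b q) (cst n c * Pgen a b (fun i => kill_x1 (q i))).
Proof.
exists (c%:MP * Qpoly (kb b) a b q), (kb b); split.
  by rewrite (@Pgen_div (kb b) a b _ (@kb_ge b)) tofrM mulrA.
by rewrite killM killC kill_Qpoly (@Pgen_div (kb b) a b _ (@kb_ge b)) tofrM mulrA.
Qed.

Lemma graph0 : phi_graph (0 : K) 0.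
Proof. by exists 0, 0%N; rewrite killE raddf0 tofr0 !mul0r. Qed.

Lemma addK (x1 x2 y1 y2 : K) : y1 != 0 -> y2 != 0 -> x1/y1 + x2/y2 = (x1*y2 + x2*y1)/(y1*y2).
Proof. exact: addf_div. Qed.

Lemma graph_add (f g f' g' : K) : phi_graph f g -> phi_graph f' g' -> phi_graph (f + f') (g + g').
Proof.
move=> [p [k [-> ->]]] [p' [k' [-> ->]]].
exists (p * Dprod n R ^+ k' + p' * Dprod n R ^+ k), (k + k')%N.
have D1 := Dprod_neq0 k.
have D2 := Dprod_neq0 k'.
rewrite exprD killD !killM !killXn kill_Dprod !tofrD !tofrM.
split.
  rewrite (addK _ _ D1 D2).
  done.
rewrite (addK _ _ D1 D2).
done.
Qed.

Lemma crossK (x y z t : K) : y != 0 -> t != 0 -> (x / y = z / t) <-> (x * t = z * y).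
Proof.
move=> y0 t0; split => E; apply/eqP.
  by rewrite -(eqr_div x z y0 t0) E.
by rewrite (eqr_div x z y0 t0) E.
Qed.

Lemma graph_uniq (f g g' : K) : phi_graph f g -> phi_graph f g' -> g = g'.
Proof.
move=> [p [k [-> ->]]] [p' [k' [E ->]]].
have D1 := Dprod_neq0 k.
have D2 := Dprod_neq0 k'.
move: E => /(crossK _ _ D1 D2) E.
apply/(crossK _ _ D1 D2).
rewrite -!tofrM; rewrite -!tofrM in E; move/tofr_inj: E => E.
move/(congr1 (@kill_x1 n R)): E; rewrite !killM !killXn kill_Dprod => ->.
done.
Qed.

Lemma phi_eq (f g : K) : phi_graph f g -> phi f = g.
Proof.
move=> H; apply: (graph_uniq _ H); rewrite /phi.
by apply: epsilon_spec; exists g.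
Qed.

End PhiSec.

Opaque kill_x1.

Section Lists.
Variable T : Type.

Lemma In_filter (p : pred T) (s : seq T) t : List.In t (filter p s) -> List.In t s /\ p t.
Proof.
elim: s => [//|x s IH] /=; case: ifP => px /=.
  by case=> [<-|/IH [? ?]]; [split; [left|] | split; [right|]].
by move/IH => [? ?]; split => //; right.
Qed.

Lemma size_filter_lt (p : pred T) (s : seq T) t : List.In t s -> ~~ p t -> (size (filter p s) < size s)%N.
Proof.
elim: s => [//|x s IH] /= Hin Hp.
have Hle : (size (filter p s) <= size s)%N by rewrite size_filter count_size.
case: Hin => [E|Hin]; first by subst x; rewrite (negbTE Hp).
by case: ifP => _ /=; [rewrite ltnS; apply: IH | apply: leq_trans (IH Hin Hp) _].
Qed.

Lemma eq_big_In (V : nmodType) (s : seq T) (f g : T -> V) :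
  (forall t, List.In t s -> f t = g t) -> \sum_(t <- s) f t = \sum_(t <- s) g t.
Proof.
elim: s => [|x s IH] H; first by rewrite !big_nil.
by rewrite !big_cons H /=; [rewrite IH // => t Ht; apply: H; right | left].
Qed.

End Lists.

Section Main.
Variables (n : nat) (R : idomainType) (F : 'I_n -> {mpoly R[n]}) (hn0 : (0 < n)%N).
Variable M : 'I_n -> 'X_{1..n}.
Hypothesis HLM : forall i : 'I_n, LM (F i) (M i).
Hypothesis HM0 : forall i j : 'I_n, (j <= i)%N -> M i j = 0%N.
Local Notation K := (ambient n R).
Local Notation T := (R * ('I_n -> nat) * ('I_n -> nat))%type.

Definition Gk i := kill_x1 (F i).
Definition Phi a b : K := Pgen a b Gk.

Lemma gmonE a b : gmon F a b = Pgen a b F.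
Proof. by []. Qed.

Lemma phi_sum (s : seq T) :
  phi (\sum_(t <- s) cst n t.1.1 * gmon F t.1.2 t.2) = \sum_(t <- s) cst n t.1.1 * Phi t.1.2 t.2.
Proof.
apply: phi_eq; elim: s => [|t s IH]; first by rewrite !big_nil; exact: graph0.
by rewrite !big_cons; apply: graph_add => //; exact: graph1.
Qed.

Let o0 : 'I_n := Ordinal hn0.

Lemma LM_G i : LM (Gk i) (M i).
Proof. by apply: (@LM_kill n R hn0); [apply: HM0 | apply: HLM]. Qed.

Definition Lead k a b : 'X_{1..n} :=
  (\big[+%MM/0%MM]_(i < n | (i : nat) != 0%N) (U_(i) *+ (a i + (k - b i)) + M i *+ b i))%MM.

Lemma LM_Q k a b : LM (Qpoly k a b Gk) (Lead k a b).
Proof.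
apply: LM_prod => i _; apply: LM_mul; last exact/LM_exp/LM_G.
by rewrite mpolyXn; apply: LM_X.
Qed.

Lemma LeadE k a b (j : 'I_n) : (Lead k a b) j =
  (\sum_(i < n | (i : nat) != 0%N) ((i == j) * (a i + (k - b i)) + M i j * b i))%N.
Proof.
rewrite /Lead mnm_sumE; apply: eq_bigr => i _.
by rewrite mnmDE !mulmnE mnm1E mulnC.
Qed.

Lemma Lead_inj k a b a' b' : is_standard a b -> is_standard a' b' ->
  (forall i : 'I_n, (i : nat) != 0%N -> (b i <= k)%N /\ (b' i <= k)%N) ->
  Lead k a b = Lead k a' b' ->
  forall i : 'I_n, (i : nat) != 0%N -> a i = a' i /\ b i = b' i.
Proof.
move=> Hs Hs' Hk E.
suff H : forall m (i : 'I_n), (i < m)%N -> (i : nat) != 0%N -> a i = a' i /\ b i = b' i.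
  by move=> i; apply: (H i.+1).
elim=> [//|m IH] i; rewrite ltnS leq_eqVlt => /orP [/eqP Him|Him] Hi; last exact: IH.
have := congr1 (fun x : 'X_{1..n} => x i) E; rewrite /= !LeadE !big_split /=.
have -> : (\sum_(i0 < n | (i0 : nat) != 0%N) M i0 i * b i0 =
           \sum_(i0 < n | (i0 : nat) != 0%N) M i0 i * b' i0)%N.
  apply: eq_bigr => i0 Hi0; case: (ltnP i0 i) => Hl.
    by rewrite (IH i0 _ Hi0).2 // -Him.
  by rewrite HM0.
have Z : forall x : 'I_n -> nat,
  (\sum_(j < n | ((j : nat) != 0%N) && (j != i)) (j == i) * x j = 0)%N.
  by move=> x; apply: big1 => j /andP [_ /negbTE ->].
rewrite !(bigD1 i Hi) /= eqxx !mul1n !Z.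
rewrite !addn0 => /eqP; rewrite eqn_add2r => /eqP E2.
have [b1 b2] := Hk i Hi.
case: (Hs i Hi) => H1; case: (Hs' i Hi) => H2; rewrite H1 H2 in E2 *; lia.
Qed.


Definition samekey (t t' : T) : bool :=
  [forall i : 'I_n, ((i : nat) != 0%N) ==> (t.1.2 i == t'.1.2 i) && (t.2 i == t'.2 i)].

Lemma samekey_refl t : samekey t t.
Proof. by apply/forallP => i; rewrite !eqxx implybT. Qed.

Lemma samekeyP t t' : samekey t t' -> forall i : 'I_n, (i : nat) != 0%N -> t.1.2 i = t'.1.2 i /\ t.2 i = t'.2 i.
Proof. by move=> /forallP H i Hi; move: (H i); rewrite Hi /= => /andP [/eqP -> /eqP ->]. Qed.

Lemma samekey_Q k t t' : samekey t t' -> Qpoly k t.1.2 t.2 Gk = Qpoly k t'.1.2 t'.2 Gk.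
Proof. by move=> /samekeyP H; apply: eq_bigr => i Hi; case: (H i Hi) => -> ->. Qed.

Lemma samekey_P t t' (q : 'I_n -> {mpoly R[n]}) : samekey t t' -> Pgen t.1.2 t.2 q = Pgen t'.1.2 t'.2 q.
Proof. by move=> /samekeyP H; apply: eq_bigr => i Hi; case: (H i Hi) => -> ->. Qed.

Lemma lexle_refl (a : 'X_{1..n}) : lexle a a.
Proof. by rewrite /lexle eqxx. Qed.

Lemma lexle_trans (a b c : 'X_{1..n}) : lexle a b -> lexle b c -> lexle a c.
Proof.
case/orP => [/eqP ->//|ab]; case/orP => [/eqP <-|bc]; first by rewrite /lexle ab orbT.
by rewrite /lexle (lexlt_trans ab bc) orbT.
Qed.

Lemma lexle_total (a b : 'X_{1..n}) : lexle a b || lexle b a.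
Proof.
case: (eqVneq a b) => [->|ab]; first by rewrite lexle_refl.
by case/orP: (lexlt_total ab) => H; rewrite /lexle H ?orbT.
Qed.

Lemma exists_min (L : T -> 'X_{1..n}) (x : T) (s : seq T) :
  exists t, List.In t (x :: s) /\ forall t', List.In t' (x :: s) -> lexle (L t) (L t').
Proof.
elim: s x => [|y s IH] x.
  by exists x; split; [left | move=> t' [<-|//]; apply: lexle_refl].
have [m [Hm Hmin]] := IH y.
case/orP: (lexle_total (L x) (L m)) => H.
  exists x; split; first by left.
  move=> t' [<-|Ht']; first exact: lexle_refl.
  exact: lexle_trans H (Hmin _ Ht').
exists m; split; first by right.
move=> t' [<-|Ht']; [exact: H | exact: Hmin].
Qed.

Lemma indepQ k : forall N (s : seq T), (size s <= N)%N ->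
  (forall t, List.In t s -> is_standard t.1.2 t.2 /\ forall i : 'I_n, (i : nat) != 0%N -> (t.2 i <= k)%N) ->
  \sum_(t <- s) t.1.1%:MP * Qpoly k t.1.2 t.2 Gk = 0 ->
  \sum_(t <- s) cst n t.1.1 * gmon F t.1.2 t.2 = 0.
Proof.
elim=> [|N IH] s Hsz Hs H0.
  by case: s Hsz {Hs H0} => // _; rewrite big_nil.
case: s Hsz Hs H0 => [|x s'] Hsz Hs H0; first by rewrite big_nil.
set s := x :: s' in Hsz Hs H0 *.
have [t0 [Ht0 Hmin]] := exists_min (fun t => Lead k t.1.2 t.2) x s'.
have Hc : \sum_(t <- s | samekey t0 t) t.1.1 = 0.
  have := congr1 (mcoeff (Lead k t0.1.2 t0.2)) H0; rewrite raddf_sum mcoeff0 /=.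
  rewrite (@eq_big_In _ _ s _ (fun t => if samekey t0 t then t.1.1 else 0)).
    by rewrite -big_mkcond.
  move=> t Ht; rewrite mcoeffCM; case: ifP => Hst.
    by rewrite -(samekey_Q k Hst) (LM_Q k t0.1.2 t0.2).1 mulr1.
  have Hlt : lexlt (Lead k t0.1.2 t0.2) (Lead k t.1.2 t.2).
    case/orP: (Hmin t Ht) => // /eqP E.
    have [St0 Bt0] := Hs t0 Ht0; have [St Bt] := Hs t Ht.
    have := Lead_inj St0 St (fun i Hi => conj (Bt0 i Hi) (Bt i Hi)) E.
    move=> H; move: Hst; suff -> : samekey t0 t by [].
    by apply/forallP => i; apply/implyP => Hi; case: (H i Hi) => -> ->; rewrite !eqxx.
  by rewrite (LM_coef_notin (LM_Q k t.1.2 t.2) Hlt) mulr0.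
rewrite (bigID (samekey t0)) /= in H0.
have E1 : \sum_(t <- s | samekey t0 t) t.1.1%:MP * Qpoly k t.1.2 t.2 Gk = 0.
  rewrite (eq_bigr (fun t => t.1.1%:MP * Qpoly k t0.1.2 t0.2 Gk)) => [|t Ht]; last first.
    by rewrite (samekey_Q k Ht).
  by rewrite -big_distrl /= -raddf_sum Hc raddf0 mul0r.
have E2 : \sum_(t <- s | samekey t0 t) cst n t.1.1 * gmon F t.1.2 t.2 = 0.
  rewrite (eq_bigr (fun t => cst n t.1.1 * gmon F t0.1.2 t0.2)) => [|t Ht]; last first.
    by rewrite !gmonE (samekey_P F Ht).
  by rewrite -big_distrl /= -cst_sum Hc cst0 mul0r.
rewrite E1 add0r in H0; rewrite (bigID (samekey t0)) /= E2 add0r.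
rewrite -big_filter in H0; rewrite -big_filter; apply: IH; last exact: H0.
  rewrite -ltnS; apply: leq_trans Hsz; apply: (size_filter_lt Ht0).
  by rewrite /= samekey_refl.
by move=> t Hin; have [Ht _] := In_filter Hin; apply: Hs.
Qed.

End Main.

Opaque kill_x1.

Section Lists2.
Variable T : Type.
Lemma In_cat (s1 s2 : seq T) t : List.In t (s1 ++ s2) -> List.In t s1 \/ List.In t s2.
Proof. elim: s1 => [|x s IH] /=; [by right | by case=> [->|/IH [H|H]]; [left; left|left; right|right]]. Qed.
Lemma In_map (U : Type) (f : U -> T) (s : seq U) t : List.In t (map f s) -> exists u, List.In u s /\ t = f u.
Proof. elim: s => [//|x s IH] /=; case=> [<-|/IH [u [Hu ->]]]; [by exists x; split; [left|] | by exists u; split; [right|]]. Qed.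
Lemma In_le_sum (f : T -> nat) (s : seq T) t : List.In t s -> (f t <= \sum_(u <- s) f u)%N.
Proof. elim: s => [//|x s IH] /=; rewrite big_cons; case=> [->|/IH H]; [exact: leq_addr | exact: leq_trans H (leq_addl _ _)]. Qed.
End Lists2.

Section Fin.
Variables (n : nat) (R : idomainType) (F : 'I_n -> {mpoly R[n]}) (hn0 : (0 < n)%N).
Variable M : 'I_n -> 'X_{1..n}.
Hypothesis HLM : forall i : 'I_n, LM (F i) (M i).
Hypothesis HM0 : forall i j : 'I_n, (j <= i)%N -> M i j = 0%N.
Local Notation K := (ambient n R).
Local Notation T := (R * ('I_n -> nat) * ('I_n -> nat))%type.
Let o0 : 'I_n := Ordinal hn0.

Lemma indep_Phi (s : seq T) : (forall t, List.In t s -> is_standard t.1.2 t.2) ->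
  \sum_(t <- s) cst n t.1.1 * Phi F t.1.2 t.2 = 0 ->
  \sum_(t <- s) cst n t.1.1 * gmon F t.1.2 t.2 = 0.
Proof.
move=> Hs H; set k := (\sum_(t <- s) kb t.2)%N.
have Hk : forall t, List.In t s -> forall i : 'I_n, (i : nat) != 0%N -> (t.2 i <= k)%N.
  by move=> t Ht i Hi; apply: leq_trans (kb_ge _ Hi) (In_le_sum (fun t : T => kb t.2) Ht).
apply: (@indepQ n R F hn0 M HLM HM0 k (size s)) => //.
  by move=> t Ht; split; [apply: Hs | apply: Hk].
apply: tofr_inj; rewrite tofr0 tofr_sum.
rewrite (@eq_big_In _ _ s _ (fun t => tofr (Dprod n R ^+ k) * (cst n t.1.1 * Phi F t.1.2 t.2))).
  by rewrite -mulr_sumr H mulr0.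
move=> t Ht; rewrite tofrM mulrCA (@Pgen_Q n R k t.1.2 t.2 (Gk F)) //.
exact: Hk.
Qed.

Definition inSpan (h : K) := exists s : seq T,
  (forall t, List.In t s -> is_standard t.1.2 t.2) /\ h = \sum_(t <- s) cst n t.1.1 * Phi F t.1.2 t.2.

Lemma span0 : inSpan 0.
Proof. by exists [::]; split => //; rewrite big_nil. Qed.

Lemma spanD h h' : inSpan h -> inSpan h' -> inSpan (h + h').
Proof.
move=> [s [Hs ->]] [s' [Hs' ->]]; exists (s ++ s'); split; last by rewrite big_cat.
by move=> t Ht; case: (In_cat Ht) => [/Hs|/Hs'].
Qed.

Lemma span1 c a b : is_standard a b -> inSpan (cst n c * Phi F a b).
Proof. by move=> H; exists [:: (c, a, b)]; split; [move=> t [<-|] | rewrite big_seq1]. Qed.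

Lemma spanZ c h : inSpan h -> inSpan (cst n c * h).
Proof.
move=> [s [Hs ->]]; elim: s Hs => [|x s IH] Hs; first by rewrite big_nil mulr0; exact: span0.
rewrite big_cons mulrDr mulrA -cstM; apply: spanD; first by apply: span1; apply: Hs; left.
by apply: IH => t Ht; apply: Hs; right.
Qed.

Lemma span_sum (I : Type) (r : seq I) (P : pred I) (f : I -> K) :
  (forall i, P i -> inSpan (f i)) -> inSpan (\sum_(i <- r | P i) f i).
Proof.
move=> H; elim: r => [|x r IH]; first by rewrite big_nil; exact: span0.
by rewrite big_cons; case: ifP => Px //; apply: spanD => //; apply: H.
Qed.


Lemma Phi_dec a b (i0 : 'I_n) : (i0 : nat) != 0%N -> (0 < a i0)%N -> (0 < b i0)%N ->
  Phi F a b = Phi F (fun i => if i == i0 then (a i).-1 else a i)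
                    (fun i => if i == i0 then (b i).-1 else b i) * tofr (Gk F i0).
Proof.
move=> Hi0 Ha Hb; rewrite /Phi /Pgen (bigD1 i0 Hi0) [in RHS](bigD1 i0 Hi0) /= !eqxx.
rewrite [RHS]mulrAC; congr (_ * _); last first.
  apply: eq_bigr => i /andP [_ Hne]; by rewrite (negbTE Hne).
rewrite -{1}(prednK Ha) -{1}(prednK Hb) !exprS.
set x := xv R i0; set y := tofr (Gk F i0).
rewrite mulrACA [_ * (y / x)]mulrC divfK ?xv_neq0 //.
by rewrite mulrC.
Qed.

Lemma Phi_X a b (m : 'X_{1..n}) : m o0 = 0%N ->
  Phi F a b * tofr 'X_[m] = Phi F (fun i => a i + m i)%N b.
Proof.
move=> Hm; rewrite mpolyXE_id tofr_prod (bigD1 o0) //= Hm expr0 mul1r.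
rewrite (eq_bigl (fun i : 'I_n => (i : nat) != 0%N)); last first.
  by move=> i /=; congr negb; apply/eqP/eqP => [->//|H]; apply: val_inj.
rewrite /Phi /Pgen -big_split /=; apply: eq_bigr => i _.
by rewrite tofrXn mulrAC -exprD.
Qed.

Lemma red N : forall a b, (\sum_(i < n | (i : nat) != 0%N) b i <= N)%N -> inSpan (Phi F a b).
Proof.
elim: N => [|N IH] a b Hb;
  case: (boolP [exists i : 'I_n, [&& (i : nat) != 0%N, (0 < a i)%N & (0 < b i)%N]]) => [/existsP [i0 /and3P [Hi0 Ha Hb0]]|Hno].
- by move: Hb; rewrite (bigD1 i0 Hi0) /=; case: (b i0) Hb0.
- rewrite -[Phi F a b]mul1r -cst1; apply: span1 => i Hi.
  move: Hno; rewrite negb_exists => /forallP /(_ i); rewrite Hi /= negb_and -!leqNgt !leqn0.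
  by case/orP => /eqP ->; [left|right].
- rewrite (Phi_dec Hi0 Ha Hb0).
  set a' := fun i => _; set b' := fun i => _.
  have Hb' : (\sum_(i < n | (i : nat) != 0%N) b' i <= N)%N.
    have Eb : (\sum_(i < n | ((i : nat) != 0%N) && (i != i0)) b' i =
               \sum_(i < n | ((i : nat) != 0%N) && (i != i0)) b i)%N.
      by apply: eq_bigr => i /andP [_ Hne]; rewrite /b' (negbTE Hne).
    move: Hb; rewrite (bigD1 i0 Hi0) [X in (X <= N)%N](bigD1 i0 Hi0) /= Eb /b' eqxx.
    by case: (b i0) Hb0.
  rewrite [Gk F i0]mpolyE tofr_sum mulr_sumr big_seq.
  apply: span_sum => m Hm.
  have [Hm0 _] := kill_supp hn0 Hm.
  rewrite -mul_mpolyC tofrM mulrCA Phi_X //; apply: spanZ; exact: IH.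
- rewrite -[Phi F a b]mul1r -cst1; apply: span1 => i Hi.
  move: Hno; rewrite negb_exists => /forallP /(_ i); rewrite Hi /= negb_and -!leqNgt !leqn0.
  by case/orP => /eqP ->; [left|right].
Qed.

End Fin.

Opaque kill_x1.

Section Final.
Variables (n : nat) (R : idomainType) (F : 'I_n -> {mpoly R[n]}) (hn0 : (0 < n)%N).
Variable M : 'I_n -> 'X_{1..n}.
Hypothesis HLM : forall i : 'I_n, LM (F i) (M i).
Hypothesis HM0 : forall i j : 'I_n, (j <= i)%N -> M i j = 0%N.
Local Notation K := (ambient n R).
Local Notation T := (R * ('I_n -> nat) * ('I_n -> nat))%type.

Definition negl (s : seq T) : seq T := map (fun t => (- t.1.1, t.1.2, t.2)) s.

Lemma sum_negl (s : seq T) (G : ('I_n -> nat) -> ('I_n -> nat) -> K) :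
  \sum_(t <- negl s) cst n t.1.1 * G t.1.2 t.2 = - \sum_(t <- s) cst n t.1.1 * G t.1.2 t.2.
Proof.
by rewrite big_map -sumrN; apply: eq_bigr => t _ /=; rewrite cstN mulNr.
Qed.

Lemma phi0 : phi (0 : K) = 0.
Proof. by have := phi_sum F [::]; rewrite !big_nil. Qed.

Lemma claim3 (f g : K) : inRst F f -> inRst F g -> phi f = phi g -> f = g.
Proof.
move=> [sf [Hf ->]] [sg [Hg ->]]; rewrite !phi_sum => E.
apply/eqP; rewrite -subr_eq0; apply/eqP.
rewrite -sum_negl -big_cat; apply: (indep_Phi hn0 HLM HM0).
  move=> t Ht0; case: (In_cat Ht0) => Ht; first exact: Hf.
  have [u [Hu ->]] := In_map Ht; exact: (Hg u Hu).
rewrite big_cat sum_negl E.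
exact: subrr.
Qed.

Lemma claim1 (f : K) : inA F f <->
  exists k s : K, [/\ inA F k, phi k = 0, inRst F s & f = k + s].
Proof.
split; last first.
  move=> [k [s [[sk ->] _ [ss [_ ->]] ->]]]; exists (sk ++ ss).
  by rewrite big_cat.
move=> [s ->].
have : inSpan F (\sum_(t <- s) cst n t.1.1 * Phi F t.1.2 t.2).
  apply: span_sum => t _; apply: spanZ.
  exact: (@red n R F hn0 _ t.1.2 t.2 (leqnn _)).
move=> [S [HS ES]].
exists (\sum_(t <- s ++ negl S) cst n t.1.1 * gmon F t.1.2 t.2),
       (\sum_(t <- S) cst n t.1.1 * gmon F t.1.2 t.2).
split.
- by exists (s ++ negl S).
- rewrite phi_sum big_cat sum_negl -ES; exact: subrr.
- by exists S.
- rewrite big_cat sum_negl; exact/esym/subrK.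
Qed.

End Final.

Unset Implicit Arguments.
Set Strict Implicit.

Theorem lemma4p17 (R : idomainType) (hUFD : is_UFD R) (hZ : contains_Z R)
  (n : nat) (hn : (2 <= n)%N) (F : 'I_n -> {mpoly R[n]})
  (hseed : LP_seed F) (hcond : condition_1_2 F) :
  (* R[x_2,x'_2,..,x_n,x'_n] = ker(phi) (+) R^st[x_2,x'_2,..,x_n,x'_n] *)
  (forall f : ambient n R,
     inA F f <->
     exists k s : ambient n R, [/\ inA F k, phi k = 0, inRst F s & f = k + s])
  /\ (forall f : ambient n R, inA F f -> phi f = 0 -> inRst F f -> f = 0)
  (* phi restricted to R^st[...] is injective *)
  /\ (forall f g : ambient n R, inRst F f -> inRst F g -> phi f = phi g -> f = g).
Proof.
have hn0 : (0 < n)%N by apply: leq_trans hn.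
case: hcond => _ [M HM].
have HLM : forall i : 'I_n, LM (F i) (M i).
  move=> i; case: (HM i) => [[[_ Hlf] [H1 _]] _ _]; split => // u Hu.
  by case: (eqVneq u (M i)) => [->|ne]; rewrite /lexle ?eqxx // Hlf // orbT.
have HM0 : forall i j : 'I_n, (j <= i)%N -> M i j = 0%N.
  by move=> i j Hj; case: (HM i) => [[_ [_ Hz]] _ _]; apply: Hz.
split; first by move=> f; apply: (@claim1 n R F hn0).
split; last by move=> f g; apply: (claim3 hn0 HLM HM0).
move=> f _ Hf Hrst; apply: (claim3 hn0 HLM HM0) => //.
  by exists [::]; split => //; rewrite big_nil.
by rewrite Hf phi0.
Qed.
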